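(* Let $\alpha\ne0$ be a nonzero square in $\mathbb{F}_p$ and let $\omega$ be the integer with $1\le\omega\le\frac{p-1}{2}$ and $\omega^2\equiv\alpha\pmod p$. Then in the block $A_\alpha$ of $\mathcal{U}_0(\mathfrak{sl}_2)$ we have $e^{p-\omega}(c-\alpha)=0$ (i.e. $\pi_\alpha e^{p-\omega}(c-\alpha)=0$).
   Context: Let $k$ be an algebraically closed field of characteristic $p>2$, $\mathfrak{sl}_2=\mathfrak{sl}_2(k)$ with standard basis $e,f,h$, and $\mathcal{U}_0(\mathfrak{sl}_2)=\mathcal{U}(\mathfrak{sl}_2)/\langle e^p,f^p,h^p-h\rangle$. $c=(h-1)^2+4ef$ is central. $\mathcal{U}_0(\mathfrak{sl}_2)=\bigoplus_\alpha A_\alpha$ is the block decomposition, $A_\alpha=\pi_\alpha\mathcal{U}_0(\mathfrak{sl}_2)$ with central idempotents $\pi_\alpha$, where $\alpha\in\mathbb{F}_p$ is the scalar by which $c$ acts on the simple modules of the block. *)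

(* Defs.v *)
From HB Require Import structures.
From mathcomp Require Import all_boot all_order all_algebra.
Set Implicit Arguments. Unset Strict Implicit. Unset Printing Implicit Defensive.
Import GRing.Theory.
Local Open Scope ring_scope.

Definition sl2_restricted_rels (k : fieldType) (A : algType k) (p : nat)
    (e f h : A) : Prop :=
  [/\ e * f - f * e = h,
      h * e - e * h = e *+ 2 &
      h * f - f * h = - (f *+ 2)] /\
  [/\ e ^+ p = 0, f ^+ p = 0 & h ^+ p = h].

Definition generated_by3 (k : fieldType) (A : algType k) (e f h : A) : Prop :=
  forall S : A -> Prop,
    S e -> S f -> S h -> S 1 ->
    (forall x y, S x -> S y -> S (x + y)) ->
    (forall x y, S x -> S y -> S (x * y)) ->
    (forall (a : k) x, S x -> S (a *: x)) ->
    forall x, S x.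

(* A is a k-algebra generated by e, f, h satisfying the relations of
   U_0(sl_2); i.e. A is a quotient of U_0(sl_2) (U_0(sl_2) itself included). *)
Definition is_U0sl2 (k : fieldType) (A : algType k) (p : nat) (e f h : A) : Prop :=
  sl2_restricted_rels p e f h /\ generated_by3 e f h.

Definition casimir (k : fieldType) (A : algType k) (e f h : A) : A :=
  (h - 1) ^+ 2 + 4%:R * (e * f).

(* pi is the component of 1 in the generalized (alpha)-eigenspace of
   (multiplication by) the central element c, along the complementary
   Fitting component:  pi \in ker (c - alpha)^n  for some n,  and
   1 - pi \in im (c - alpha)^m  for every m.  This is the central block
   idempotent pi_alpha of the block on whose simple modules c acts by alpha. *)
Definition block_idempotent (k : fieldType) (A : algType k) (c : A) (alpha : k)
    (pi : A) : Prop :=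
  (exists n : nat, (c - alpha%:A) ^+ n * pi = 0) /\
  (forall m : nat, exists z : A, 1 - pi = (c - alpha%:A) ^+ m * z).

(* Main.v *)
Require Import Defs.
From HB Require Import structures.
From mathcomp Require Import all_boot all_order all_algebra.
From mathcomp Require Import ring zify.
Import GRing.Theory.


Lemma mod_inj p w mu j j' : 2 * w < p -> j < w -> j' < w ->
  (mu + 2 * j + 1) %% p = (mu + 2 * j' + 1) %% p -> j = j'.
Proof.
move=> hw hj hj' E.
have := divn_eq (mu + 2 * j + 1) p; have := divn_eq (mu + 2 * j' + 1) p.
rewrite E; set r := _ %% p; set qa := (mu + 2 * j + 1) %/ p; set qb := _ %/ p.
case: (ltngtP qa qb) => [/subnKC <- | /subnKC <- | ->]; last by lia.
- move: (qb - qa.+1) => d; rewrite mulSn mulnDl; move: (qa * p) (d * p) => X Y; lia.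
- move: (qa - qb.+1) => d; rewrite mulSn mulnDl; move: (qb * p) (d * p) => X Y; lia.
Qed.

Lemma no_both p w mu j j' : odd p -> 2 * w < p -> j < w -> j' < w ->
  (mu + 2 * j + 1) %% p = w -> (mu + 2 * j' + 1) %% p = p - w -> False.
Proof.
move=> op hw hj hj' E1 E2.
have := divn_eq (mu + 2 * j + 1) p; have := divn_eq (mu + 2 * j' + 1) p.
rewrite E1 E2; set qa := (mu + 2 * j + 1) %/ p; set qb := _ %/ p.
have [t ht] : exists t, p = t.*2.+1 by exists p./2; rewrite -[LHS]odd_double_half op.
case: (ltngtP qa qb) => [/subnKC <- | /subnKC <- | ->].
- move: (qb - qa.+1) => d; rewrite mulSn !mulnDl; move: (qa * p) (d * p) => X Y; lia.
- move: (qa - qb.+1) => d; rewrite mulSn !mulnDl; move: (qb * p) (d * p) => X Y; lia.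
- move: (qa * p) => X; lia.
Qed.

Lemma not_dvd_lt2p p n : 0 < n -> n < p.*2 -> n != p -> ~~ (p %| n).
Proof.
move=> h0 h1 h2; apply/negP => /dvdnP [[|[|q]] hq]; lia.
Qed.

Set Implicit Arguments. Unset Strict Implicit.
Local Open Scope ring_scope.

Lemma fe_rel (k : fieldType) (A : algType k) (e f h : A) :
  e * f - f * e = h -> f * e = e * f - h.
Proof. by move=> <-; rewrite opprB addrC subrK. Qed.

Lemma he_rel (k : fieldType) (A : algType k) (e h : A) :
  h * e - e * h = e *+ 2 -> h * e = e * h + e *+ 2.
Proof. by move=> <-; rewrite addrC subrK. Qed.

Lemma hf_rel (k : fieldType) (A : algType k) (f h : A) :
  h * f - f * h = - (f *+ 2) -> h * f = f * h - f *+ 2.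
Proof. by move=> H; rewrite -H addrC subrK. Qed.

Lemma alg_nat (k : fieldType) (A : algType k) n : (n%:R : k)%:A = n%:R :> A.
Proof. by rewrite -in_algE rmorph_nat. Qed.

Lemma shift_e (k : fieldType) (A : algType k) (e h : A) (b : k) :
  h * e = e * h + e *+ 2 ->
  (h + b%:A) * e = e * (h + (b + 2%:R)%:A).
Proof.
move=> he; rewrite mulrDl he scalerDl !mulrDr comm_alg alg_nat mulr_natr.
by rewrite [RHS]addrA [RHS]addrAC.
Qed.

Lemma shift_f (k : fieldType) (A : algType k) (f h : A) (b : k) :
  h * f = f * h - f *+ 2 ->
  (h + b%:A) * f = f * (h + (b - 2%:R)%:A).
Proof.
move=> hf; rewrite mulrDl hf scalerBl !mulrDr comm_alg alg_nat.
by rewrite mulrN mulr_natr [RHS]addrA [RHS]addrAC.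
Qed.


Lemma alg_m1 (k : fieldType) (A : algType k) (h : A) : h - 1 = h + (-1)%:A.
Proof. by rewrite scaleN1r. Qed.
Lemma alg_p1 (k : fieldType) (A : algType k) (h : A) : h + 1 = h + 1%:A.
Proof. by rewrite scale1r. Qed.

Lemma shift_e2 (k : fieldType) (A : algType k) (e h : A) (b : k) :
  h * e = e * h + e *+ 2 ->
  (h + b%:A)^+2 * e = e * (h + (b + 2%:R)%:A)^+2.
Proof. by move=> he; rewrite !expr2 -mulrA (shift_e b he) mulrA (shift_e _ he) -mulrA. Qed.

Lemma shift_f2 (k : fieldType) (A : algType k) (f h : A) (b : k) :
  h * f = f * h - f *+ 2 ->
  (h + b%:A)^+2 * f = f * (h + (b - 2%:R)%:A)^+2.
Proof. by move=> hf; rewrite !expr2 -mulrA (shift_f b hf) mulrA (shift_f _ hf) -mulrA. Qed.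

Lemma sq_id (R : comRingType) (x : R) : (x - 1)^+2 = (x + 1)^+2 - 4%:R * x.
Proof. by ring. Qed.

Lemma cform (k : fieldType) (A : algType k) (e f h : A) :
  e * f - f * e = h ->
  casimir e f h = (h + 1)^+2 + 4%:R * (f * e).
Proof.
move=> /fe_rel ->; rewrite /casimir.
have Hp := sq_id ('X : {poly k}).
have := congr1 (horner_alg h) Hp.
rewrite !(rmorphB, rmorphXn, rmorphD, rmorph1, rmorphM, rmorph_nat) /= horner_algX => ->.
by rewrite mulrBr [RHS]addrA [RHS]addrAC.
Qed.

Lemma casimir_comm (k : fieldType) (A : algType k) (e f h : A) :
  e * f - f * e = h -> h * e - e * h = e *+ 2 -> h * f - f * h = - (f *+ 2) ->
  [/\ GRing.comm (casimir e f h) e, GRing.comm (casimir e f h) f &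
      GRing.comm (casimir e f h) h].
Proof.
move=> Hef Hhe Hhf; have fe := fe_rel Hef; have he := he_rel Hhe; have hf := hf_rel Hhf.
split.
- rewrite /GRing.comm {2}(cform Hef) /casimir mulrDl alg_m1 shift_e2 //.
  have -> : (-1 + 2%:R : k) = 1 by rewrite addrC -addrA subrr addr0.
  rewrite -alg_p1 mulrDr -!mulrA; congr (_ + _).
  by rewrite mulrA -(commr_nat e 4) -mulrA.
- rewrite /GRing.comm {1}(cform Hef) /casimir mulrDl alg_p1 shift_f2 //.
  have -> : (1 - 2%:R : k) = -1 by rewrite -[2%:R]/(1 + 1 : k) opprD addrA subrr add0r.
  rewrite -alg_m1 mulrDr -!mulrA; congr (_ + _).
  by rewrite mulrA -(commr_nat f 4) -mulrA.
- apply: commr_sym; rewrite /casimir; apply: commrD.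
    by apply/commrX/commrB => //; exact: commr1.
  apply: commrM; first exact: commr_nat.
  rewrite /GRing.comm mulrA he mulrDl -mulrA hf mulrBr mulrnAl mulrnAr subrK.
  by rewrite mulrA.
Qed.


Definition central (k : fieldType) (A : algType k) (z : A) := forall x, GRing.comm z x.

Lemma casimir_central (k : fieldType) (A : algType k) (p : nat) (e f h : A) :
  is_U0sl2 p e f h -> central (casimir e f h).
Proof.
move=> [[[Hef Hhe Hhf] _] Hgen].
have [ce cf ch] := casimir_comm Hef Hhe Hhf.
apply: (Hgen (fun x => GRing.comm (casimir e f h) x)) => //.
- exact: commr1.
- by move=> x y; apply: commrD.
- by move=> x y; apply: commrM.
- by move=> a x cx; rewrite /GRing.comm -scalerAr cx scalerAl.
Qed.

Lemma shift_en (k : fieldType) (A : algType k) (e h : A) (b : k) n :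
  h * e = e * h + e *+ 2 ->
  (h + b%:A) * e^+n = e^+n * (h + (b + (2 * n)%:R)%:A).
Proof.
move=> he; elim: n b => [|n IH] b; first by rewrite !expr0 mul1r mulr1 muln0 addr0.
rewrite exprS mulrA shift_e // -mulrA IH mulrA -exprS -addrA -natrD.
by rewrite mulnS.
Qed.

Lemma shift_en2 (k : fieldType) (A : algType k) (e h : A) (b : k) n :
  h * e = e * h + e *+ 2 ->
  (h + b%:A)^+2 * e^+n = e^+n * (h + (b + (2 * n)%:R)%:A)^+2.
Proof. by move=> he; rewrite !expr2 -mulrA (shift_en b n he) mulrA (shift_en b n he) -mulrA. Qed.

Definition Ffac (k : fieldType) (A : algType k) (c h : A) (j : nat) : A :=
  c - (h + ((2 * j + 1)%:R : k)%:A)^+2.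

Lemma fe_prod (k : fieldType) (A : algType k) (p : nat) (e f h : A) n :
  is_U0sl2 p e f h ->
  (4%:R)^+n * (f^+n * e^+n) = \prod_(0 <= j < n) Ffac (casimir e f h) h j.
Proof.
move=> hU; have cc := casimir_central hU.
move: hU => [[[Hef Hhe Hhf] _] _]; have he := he_rel Hhe.
elim: n => [|n IH]; first by rewrite big_nil !expr0 !mul1r.
rewrite big_nat_recr //= -IH.
have H4 : 4%:R * (f * e) = casimir e f h - (h + 1)^+2.
  by rewrite (cform Hef) addrAC subrr add0r.
rewrite exprSr exprSr exprS -!mulrA; congr (_ * _).
rewrite mulrA -(commr_nat (f^+n) 4) -mulrA; congr (_ * _).
rewrite [f * (e * _)]mulrA mulrA H4.
rewrite /Ffac mulrBl (cc (e^+n)) alg_p1 (shift_en2 1 n he) mulrBr.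
by rewrite (addrC (1 : k)) natr1 addn1.
Qed.


Lemma natr_inj_lt (k : fieldType) p i j : p \in [pchar k] -> (i < p)%N -> (j < p)%N ->
  ((i%:R : k) == j%:R) = (i == j).
Proof.
move=> hc hi hj; apply/eqP/eqP => [|-> //].
wlog le_ij : i j hi hj / (i <= j)%N.
  move=> W E; case: (leqP i j) => [|/ltnW] h; first exact: W.
  by apply/esym/W.
move=> E; have : ((j - i)%:R : k) == 0 by rewrite natrB // E subrr.
rewrite -(dvdn_pcharf hc); case: (posnP (j - i)) => [|pos]; first by lia.
by move/dvdn_leq => /(_ pos); lia.
Qed.

Definition PiP (k : fieldType) n : {poly k} := \prod_(i <- iota 0 n) ('X - (i%:R)%:P).
Definition Lp (k : fieldType) n mu : {poly k} :=
  \prod_(i <- iota 0 n | i != mu) ('X - (i%:R)%:P).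

Lemma PiP_char (k : fieldType) p : p \in [pchar k] -> PiP k p = 'X^p - 'X.
Proof.
move=> hc; have pp := pcharf_prime hc; have p1 := prime_gt1 pp.
have sz : size ('X^p - 'X : {poly k}) = p.+1.
  by rewrite size_addl ?size_polyXn // size_opp size_polyX; lia.
set rs := [seq (i%:R : k) | i <- iota 0 p].
have Hr : all (root ('X^p - 'X)) rs.
  apply/allP => x /mapP [i _ ->]; rewrite rootE !hornerE.
  by rewrite -(pFrobenius_autE hc) (pFrobenius_aut_nat hc) subrr.
have Hu : uniq_roots rs.
  rewrite uniq_rootsE map_inj_in_uniq ?iota_uniq // => i j.
  rewrite !mem_iota /= !add0n => hi hj /eqP; rewrite (natr_inj_lt hc) //.
  by move/eqP.
have H := @all_roots_prod_XsubC _ ('X^p - 'X) rs.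
rewrite size_map size_iota in H; rewrite [RHS](H sz Hr Hu).
rewrite lead_coefDl ?lead_coefXn ?scale1r ?big_map //.
by rewrite size_polyXn size_opp size_polyX; lia.
Qed.

Lemma deriv_PiP (k : fieldType) n :
  (PiP k n)^`() = \sum_(mu <- iota 0 n) Lp k n mu.
Proof.
elim: n => [|n IH]; first by rewrite /PiP /Lp !big_nil derivC.
rewrite /PiP -addn1 iotaD big_cat big_seq1 /= derivM derivXsubC mulr1 -/(PiP k n) IH.
rewrite big_cat big_seq1 /= big_distrl /=; congr (_ + _).
  rewrite big_seq [RHS]big_seq; apply: eq_bigr => mu; rewrite mem_iota => hmu.
  rewrite /Lp -addn1 iotaD big_cat /= big_cons big_nil.
  by rewrite ifT ?mulr1 //; apply/eqP; lia.
rewrite /Lp -addn1 iotaD big_cat /= big_cons big_nil /= eqxx /= !mulr1 /PiP.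
rewrite big_seq_cond [RHS]big_seq_cond; apply: eq_bigl => i /=.
by rewrite andbT andb_idr // mem_iota => h; apply/eqP; lia.
Qed.

Lemma sumLp (k : fieldType) p : p \in [pchar k] ->
  \sum_(mu <- iota 0 p) Lp k p mu = -1.
Proof.
move=> hc; rewrite -deriv_PiP PiP_char // derivB derivXn derivX.
have hc' : p \in [pchar {poly k}] by rewrite pchar_poly.
by rewrite (mulrn_pchar hc') sub0r.
Qed.

Lemma Lp_mul (k : fieldType) p mu : (mu < p)%N ->
  ('X - (mu%:R)%:P) * Lp k p mu = PiP k p.
Proof.
by move=> hmu; rewrite /PiP (bigD1_seq mu) ?iota_uniq // mem_iota; apply/andP; split.
Qed.

Definition G (k : fieldType) (r : nat) : {poly k} := 'X - (((r%:R : k)^+2))%:P.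

Lemma sub_prod (R : comRingType) (I : eqType) (s r : seq I) (F : I -> R) :
  uniq s -> uniq r -> {subset r <= s} ->
  \prod_(i <- s) F i = \prod_(i <- s | i \notin r) F i * \prod_(i <- r) F i.
Proof.
move=> us ur srs.
have H : perm_eq s (r ++ [seq i <- s | i \notin r]).
  rewrite perm_sym; apply: (@perm_trans _ ([seq i <- s | i \in r] ++ [seq i <- s | i \notin r])).
    rewrite perm_cat2r; apply: uniq_perm => //; first exact: filter_uniq.
    by move=> x; rewrite mem_filter; apply/idP/andP => [h|[]//]; split => //; apply: srs.
  by apply/permPl; exact: (perm_filterC (fun i => i \in r) s).
by rewrite (perm_big _ H) big_cat /= big_filter mulrC.
Qed.

Lemma G_opp (k : fieldType) p w : p \in [pchar k] -> (w <= p)%N -> G k (p - w) = G k w.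
Proof.
by move=> hc hw; rewrite /G natrB // (pcharf0 hc) sub0r sqrrN.
Qed.

Lemma T_split (k : fieldType) p w : p \in [pchar k] -> (0 < w)%N -> (2 * w < p)%N ->
  \prod_(i <- iota 0 p | i != w) G k i =
    G k w * \prod_(i <- iota 0 p | (i != w) && (i != (p - w)%N)) G k i /\
  \prod_(i <- iota 0 p | i != (p - w)%N) G k i =
    G k w * \prod_(i <- iota 0 p | (i != w) && (i != (p - w)%N)) G k i.
Proof.
move=> hc w0 hw; split.
  rewrite -big_filter (bigD1_seq (p - w)%N) ?filter_uniq ?iota_uniq //; last first.
    by rewrite mem_filter mem_iota; apply/andP; split; [apply/eqP|]; lia.
  by rewrite big_filter_cond G_opp //; lia.
rewrite -big_filter (bigD1_seq w) ?filter_uniq ?iota_uniq //; last first.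
  by rewrite mem_filter mem_iota; apply/andP; split; [apply/eqP|]; lia.
rewrite big_filter_cond; congr (_ * _); apply: eq_bigl => i; exact: andbC.
Qed.


Lemma Pdiv (k : fieldType) p w mu : p \in [pchar k] -> (0 < w)%N -> (2 * w < p)%N ->
  exists S : {poly k}, \prod_(i <- iota 0 p | i != w) G k i =
     S * \prod_(j <- iota 0 w) G k ((mu + 2 * j + 1) %% p).
Proof.
move=> hc w0 hw.
have pp := pcharf_prime hc.
have op : odd p.
  by apply/negPn/negP => /(prime_oddPn pp) p2; lia.
set R := map (fun j => (mu + 2 * j + 1) %% p)%N (iota 0 w).
have -> : \prod_(j <- iota 0 w) G k ((mu + 2 * j + 1) %% p) = \prod_(r <- R) G k r.
  by rewrite big_map.
have uR : uniq R.
  rewrite map_inj_in_uniq ?iota_uniq // => j j'; rewrite !mem_iota /= !add0n => hj hj'.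
  move=> E; apply: (@mod_inj p w mu j j') E; lia.
pose x := if w \in R then (p - w)%N else w.
have [T1 T2] := T_split hc w0 hw.
have -> : \prod_(i <- iota 0 p | i != w) G k i = \prod_(i <- iota 0 p | i != x) G k i.
  by rewrite /x; case: ifP => _ //; rewrite T1 T2.
rewrite -big_filter (sub_prod _ (filter_uniq _ (iota_uniq _ _)) uR); first by eexists.
move=> r rR; rewrite mem_filter mem_iota /=.
have [j hj ->] := mapP rR; rewrite ltn_pmod ?prime_gt0 // andbT.
rewrite mem_iota /= add0n in hj.
rewrite /x; case: ifP => wR; apply/eqP => E.
- have [j0 hj0 E0] := mapP wR; rewrite mem_iota /= add0n in hj0.
  by apply: (@no_both p w mu j0 j op hw) => //; try lia; rewrite -E0.
- have : w \in R by rewrite -E (map_f (fun j => (mu + 2 * j + 1) %% p)%N) // mem_iota; lia.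
  by rewrite wR.
Qed.

Lemma Q_nonzero (k : fieldType) p w : p \in [pchar k] -> (0 < w)%N -> (2 * w < p)%N ->
  (\prod_(i <- iota 0 p | (i != w) && (i != (p - w)%N)) G k i).[(w%:R)^+2] != 0.
Proof.
move=> hc w0 hw; rewrite horner_prod prodf_seq_neq0; apply/allP => i.
rewrite mem_iota /= add0n => hi; apply/implyP => /andP[h1 h2].
rewrite /G hornerXsubC subr_sqr mulf_neq0 //.
  by rewrite subr_eq0 (natr_inj_lt hc) // ?(eq_sym w) //; lia.
rewrite -natrD -(dvdn_pcharf hc) not_dvd_lt2p //; try lia.
Qed.


Lemma hpoly_comm (k : fieldType) (A : algType k) (h z : A) (q : {poly k}) :
  GRing.comm z h -> GRing.comm z (horner_alg h q).
Proof.
move=> hz; elim/poly_ind: q => [|q a IH]; first by rewrite rmorph0; exact: commr0.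
rewrite rmorphD rmorphM /= horner_algX horner_algC.
apply: commrD; first exact: commrM.
exact: commr_sym (comm_alg a z).
Qed.

Lemma central_horner (k : fieldType) (A : algType k) (c : A) (q : {poly k}) :
  central c -> central (horner_alg c q).
Proof. by move=> cc x; apply/commr_sym/hpoly_comm/commr_sym. Qed.

Lemma eig_fac (k : fieldType) (A : algType k) (c h V : A) (mu a : k) :
  h * V = mu *: V ->
  (c - (h + a%:A)^+2) * V = horner_alg c ('X - ((mu + a)^+2)%:P) * V.
Proof.
move=> hV.
have E1 : (h + a%:A) * V = (mu + a) *: V by rewrite mulrDl hV mulr_algl scalerDl.
rewrite rmorphB /= horner_algX horner_algC !mulrBl expr2 -mulrA E1 -scalerAr E1.
by rewrite scalerA -expr2 mulr_algl.
Qed.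

Lemma eig_prod (k : fieldType) (A : algType k) (c h V : A) (mu : k) (s : seq k) :
  central c -> h * V = mu *: V ->
  (\prod_(a <- s) (c - (h + a%:A)^+2)) * V =
    horner_alg c (\prod_(a <- s) ('X - ((mu + a)^+2)%:P)) * V.
Proof.
move=> cc hV; elim: s => [|a s IH]; first by rewrite !big_nil rmorph1.
rewrite !big_cons rmorphM -!mulrA IH [LHS]mulrA.
rewrite -[_ * horner_alg c _](central_horner _ cc) -[LHS]mulrA (eig_fac _ _ hV).
by rewrite [LHS]mulrA [RHS]mulrA; congr (_ * _); apply: central_horner.
Qed.


Lemma comm_step (R : ringType) (D H W : R) i : H * D^+i = D^+i * H ->
  D^+i.+1 * W = 0 -> D^+i * (H * (D * W)) = 0.
Proof.
by move=> HC Hi; rewrite (mulrA (D^+i) H) -HC -(mulrA H) (mulrA (D^+i) D) -exprSr Hi mulr0.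
Qed.

Unset Implicit Arguments.

Theorem lemma4p9 (k : closedFieldType) (p : nat)
    (hchar : p \in [pchar k]) (hp2 : (2 < p)%N)
    (A : algType k) (e f h : A) (hU : is_U0sl2 p e f h)
    (omega : nat) (homega1 : (1 <= omega)%N) (homega2 : (omega <= (p - 1) %/ 2)%N)
    (alpha : k) (halpha : alpha = (omega ^ 2)%:R)
    (pi : A) (hpi : block_idempotent (casimir e f h) alpha pi) :
  pi * (e ^+ (p - omega) * (casimir e f h - alpha%:A)) = 0.
Proof.
have hc := hchar.
have hw : (2 * omega < p)%N.
  have := leq_trunc_div (p - 1) 2; lia.
have w0 : (0 < omega)%N by [].
pose c := casimir e f h.
have cc : central c := casimir_central hU.
have [[[Hef Hhe Hhf] [ep fp hp]] _] := hU.
pose Y := e ^+ (p - omega).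
pose s := map (fun j => ((2 * j + 1)%:R : k)) (iota 0 omega).
have PY : (\prod_(a <- s) (c - (h + a%:A)^+2)) * Y = 0.
  have -> : \prod_(a <- s) (c - (h + a%:A)^+2) = \prod_(0 <= j < omega) Ffac c h j.
    by rewrite big_map /index_iota subn0.
  rewrite -(fe_prod omega hU) -!mulrA /Y -exprD subnKC; last by lia.
  by rewrite ep !mulr0.
have Pcomm : GRing.comm (\prod_(a <- s) (c - (h + a%:A)^+2)) h.
  apply/commr_sym/commr_prod => a _; apply: commrB; first exact/commr_sym/cc.
  by apply/commrX/commrD; [exact: commr_refl | exact/commr_sym/comm_alg].
have hX : horner_alg h ('X^p - 'X) = 0.
  by rewrite rmorphB rmorphXn /= horner_algX hp subrr.
pose Tp := \prod_(i <- iota 0 p | i != omega) G k i.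
have TV : forall mu, (mu < p)%N -> horner_alg c Tp * (horner_alg h (Lp k p mu) * Y) = 0.
  move=> mu hmu.
  pose V := horner_alg h (Lp k p mu) * Y.
  have hV : h * V = (mu%:R : k) *: V.
    have := congr1 (horner_alg h) (Lp_mul k hmu).
    rewrite PiP_char // hX rmorphM rmorphB /= horner_algX horner_algC => /eqP.
    rewrite mulrBl subr_eq0 => /eqP E.
    by rewrite /V mulrA E -mulrA mulr_algl.
  have PV : (\prod_(a <- s) (c - (h + a%:A)^+2)) * V = 0.
    by rewrite /V mulrA (hpoly_comm _ Pcomm) -mulrA PY mulr0.
  rewrite (eig_prod s cc hV) in PV.
  have Pmu : \prod_(a <- s) ('X - ((mu%:R + a)^+2)%:P) =
      \prod_(j <- iota 0 omega) G k ((mu + 2 * j + 1) %% p).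
    by rewrite big_map; apply: eq_bigr => j _; rewrite /G (GRing.natr_mod_pchar hc) -addnA !natrD.
  rewrite /Tp; have [S ->] := Pdiv mu hc w0 hw.
  by rewrite rmorphM -mulrA -Pmu PV mulr0.
have Tsum : horner_alg c Tp * Y = 0.
  have ES : \sum_(mu <- iota 0 p) horner_alg h (Lp k p mu) * Y = - Y.
    by rewrite -mulr_suml -rmorph_sum sumLp // rmorphN rmorph1 mulN1r.
  rewrite -[Y]opprK -ES mulrN mulr_sumr big_seq big1 ?oppr0 // => mu.
  by rewrite mem_iota => hmu; apply: TV; lia.
have [T1 _] := T_split hc w0 hw.
rewrite /Tp T1 rmorphM /= in Tsum.
pose Q := \prod_(i <- iota 0 p | (i != omega) && (i != (p - omega)%N)) G k i.
have hG : horner_alg c (G k omega) = c - alpha%:A.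
  by rewrite /G rmorphB /= horner_algX horner_algC halpha natrX.
rewrite -/Q hG in Tsum.
have Dc : central (c - alpha%:A).
  by move=> x; apply/commr_sym/commrB; [exact/commr_sym/cc | exact/commr_sym/comm_alg].
have QZ : horner_alg c Q * (pi * (Y * (c - alpha%:A))) = 0.
  rewrite [horner_alg c Q * _]mulrA (central_horner _ cc pi) -mulrA -(Dc Y) [horner_alg c Q * _]mulrA -(Dc (horner_alg c Q)).
  by rewrite Tsum mulr0.
have q0 : Q.[alpha] != 0.
  by rewrite halpha natrX; apply: Q_nonzero.
have [R HR] : exists R, Q - (Q.[alpha])%:P = R * ('X - alpha%:P).
  by apply/factor_theorem; rewrite rootE !hornerE subrr.
have HQ : horner_alg c Q = (Q.[alpha])%:A + horner_alg c R * (c - alpha%:A).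
  have := congr1 (horner_alg c) HR.
  rewrite rmorphB rmorphM /= !horner_algC rmorphB /= horner_algX horner_algC => <-.
  by rewrite addrC subrK.
have step : forall i, (c - alpha%:A)^+i.+1 * (pi * (Y * (c - alpha%:A))) = 0 ->
    (c - alpha%:A)^+i * (pi * (Y * (c - alpha%:A))) = 0.
  move=> i Hi.
  have : (c - alpha%:A)^+i * (horner_alg c Q * (pi * (Y * (c - alpha%:A)))) = 0.
    by rewrite QZ mulr0.
  rewrite HQ mulrDl mulrDr mulr_algl -scalerAr -mulrA.
  rewrite (comm_step (central_horner _ cc _) Hi).
  rewrite addr0 => /eqP; rewrite scaler_eq0 (negPf q0) /= => /eqP //.
have [n Hn] := hpi.1.
have H : forall i, (i <= n)%N ->
    (c - alpha%:A)^+(n - i) * (pi * (Y * (c - alpha%:A))) = 0.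
  elim => [|i IH] hi; first by rewrite subn0 (mulrA _ pi); move: Hn; rewrite -/c => ->; rewrite mul0r.
  apply: step; have -> : (n - i.+1).+1 = (n - i)%N by lia.
  by apply: IH; lia.
by move: (H n (leqnn n)); rewrite subnn expr0 mul1r.
Qed.
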